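(* Let $X\subseteq\Omega$ be club in $\Omega$ with $0\notin X$, and let $\xi\in\hat\varepsilon_{\Omega+1}$. Then $\Theta_X(\xi)\notin X'$ if and only if $\xi<\Omega$ and $\xi\in\mathrm{JUMP}(X)$.
   Context: $\Omega$ is the first uncountable ordinal; $\varepsilon_{\Omega+1}$ the least $\varepsilon>\Omega$ with $\omega^\varepsilon=\varepsilon$. Every $0<\xi<\varepsilon_{\Omega+1}$ has a unique $\Omega$-normal form $\xi=\Omega^{\alpha}\beta+\gamma$ with $0<\beta<\Omega$, $\gamma<\Omega^{\alpha}$. $C(0)=\{0\}$, $C(\Omega^\alpha\beta+\gamma)=C(\alpha)\cup C(\gamma)\cup\{\beta\}$; $\xi^*=\max C(\xi)$. For $\theta<\Omega$: $0[\theta]=1[\theta]=0$; $(\Omega^\alpha\beta+\gamma)[\theta]=\Omega^\alpha\beta+\gamma[\theta]$ if $\gamma>0$; $(\Omega^\alpha\beta)[\theta]=\Omega^\alpha\theta$ if $\beta$ is a limit; $\Omega^{\alpha+1}[\theta]=\Omega^\alpha\theta$; $(\Omega^\alpha(\beta+1))[\theta]=\Omega^\alpha\beta+(\Omega^\alpha)[\theta]$ if $\beta>0$; $\Omega^\alpha[\theta]=\Omega^{\alpha[\theta]}$ if $\alpha$ is a limit. $\tau(0)=0$, $\tau(\zeta+1)=1$, $\tau(\Omega^\alpha\beta+\gamma)=\tau(\gamma)$ if $\gamma>0$, $\tau(\Omega^\alpha\beta)=\beta$ if $\beta$ limit, $\tau(\Omega^\alpha(\beta+1))=\tau(\alpha)$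 if $\alpha$ limit, $\tau(\Omega^{\alpha+1}(\beta+1))=\Omega$. $\Theta_X(\xi)$ is the least $\theta\in X$ with $\theta>\xi^*$ such that all $\zeta<\xi$ with $\zeta^*<\theta$ have $\Theta_X(\zeta)<\theta$. $\Omega_0=1$, $\Omega_{n+1}=\Omega^{\Omega_n}$, $\Theta_X(\varepsilon_{\Omega+1})=\sup_n\Theta_X(\Omega_n)$, $\hat\varepsilon_{\Omega+1}=\{\xi<\varepsilon_{\Omega+1}:\xi^*<\Theta_X(\varepsilon_{\Omega+1})\}$; $X'$ is the set of limit points of $X$. $\mathrm{FIX}(X)$ is the set of $\xi<\varepsilon_{\Omega+1}$ with $(\xi[1])^*<\xi^*=\tau(\xi)=\Theta_X(\gamma)$ for some $\gamma>\xi$; $\mathrm{JUMP}(X)=\{0\}\cup\{\text{successor ordinals}\}\cup\mathrm{FIX}(X)$. *)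

(* Defs.v *)
(* classical. Ordinals below epsilon_{Omega+1} via Omega-normal forms
   with coefficients in an abstract model of the first uncountable ordinal. *)
From Stdlib Require Import List ClassicalEpsilon.
Import ListNotations.

Set Implicit Arguments.

(* This characterizes omega_1 up to isomorphism.
   Zero and successor are included as operations together with their
   characterizing properties (they are uniquely determined by the order). *)
Record Omega1 := {
  W :> Type;
  wlt : W -> W -> Prop;
  wlt_irrefl : forall a, ~ wlt a a;
  wlt_trans : forall a b c, wlt a b -> wlt b c -> wlt a c;
  wlt_total : forall a b, wlt a b \/ a = b \/ wlt b a;
  wlt_wf : well_founded wlt;
  wlt_seg_countable : forall a, exists f : {b : W | wlt b a} -> nat,
      forall x y, f x = f y -> x = y;
  W_uncountable : ~ exists f : W -> nat, forall x y, f x = f y -> x = y;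
  wzero : W;
  wzero_least : forall a, ~ wlt a wzero;
  wsucc : W -> W;
  wsucc_lt : forall a, wlt a (wsucc a);
  wsucc_least : forall a b, wlt a b -> b = wsucc a \/ wlt (wsucc a) b
}.

Arguments wlt {o}.
Arguments wzero {o}.
Arguments wsucc {o}.

Definition dec (P : Prop) : bool :=
  if excluded_middle_informative P then true else false.

Section Ord.
Context {Om : Omega1}.

Definition wone : Om := wsucc wzero.
Definition wle (a b : Om) : Prop := wlt a b \/ a = b.
Definition wmax (a b : Om) : Om := if dec (wlt a b) then b else a.
Definition w_is_succ (b : Om) : Prop := exists p, wsucc p = b.
Definition w_is_limit (b : Om) : Prop := b <> wzero /\ ~ w_is_succ b.
Definition wpred (b : Om) : Om := epsilon (inhabits wzero) (fun p => wsucc p = b).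

(* Terms: Tp a b c denotes Omega^a * b + c. *)
Inductive T : Type :=
| Tz : T
| Tp : T -> Om -> T -> T.

Fixpoint tlt (x y : T) : Prop :=
  match x, y with
  | _, Tz => False
  | Tz, Tp _ _ _ => True
  | Tp a b c, Tp a' b' c' =>
      tlt a a' \/ (a = a' /\ (wlt b b' \/ (b = b' /\ tlt c c')))
  end.

Fixpoint nf (x : T) : Prop :=
  match x with
  | Tz => True
  | Tp a b c => nf a /\ b <> wzero /\ nf c /\
      match c with Tz => True | Tp a' _ _ => tlt a' a end
  end.

Definition tone : T := Tp Tz wone Tz.

Definition tmul (a : T) (th : Om) : T := if dec (th = wzero) then Tz else Tp a th Tz.

Definition below_Omega (x : T) : Prop :=
  match x with Tz => True | Tp a _ _ => a = Tz end.

Fixpoint t_is_succ (x : T) : Prop :=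
  match x with
  | Tz => False
  | Tp a b c => match c with
                | Tz => a = Tz /\ w_is_succ b
                | Tp _ _ _ => t_is_succ c
                end
  end.
Definition t_is_limit (x : T) : Prop := x <> Tz /\ ~ t_is_succ x.

Fixpoint tpred (x : T) : T :=
  match x with
  | Tz => Tz
  | Tp a b c => match c with
                | Tz => tmul a (wpred b)
                | Tp _ _ _ => Tp a b (tpred c)
                end
  end.

Fixpoint Cset (x : T) : list Om :=
  match x with
  | Tz => [wzero]
  | Tp a b c => Cset a ++ Cset c ++ [b]
  end.
Definition star (x : T) : Om := fold_right wmax wzero (Cset x).

Fixpoint fs (x : T) (th : Om) : T :=
  match x with
  | Tz => Tz
  | Tp a b c =>
      match c with
      | Tp _ _ _ => Tp a b (fs c th)
      | Tz =>
          if dec (w_is_limit b) then tmul a th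
          else
            (* b = b' + 1 ; first compute (Omega^a)[theta] *)
            let pw := if dec (a = Tz) then Tz
                      else if dec (t_is_succ a) then tmul (tpred a) th
                      else Tp (fs a th) wone Tz in
            let b' := wpred b in
            if dec (b' = wzero) then pw else Tp a b' pw
      end
  end.

(* tau; None stands for the value Omega *)
Fixpoint tau (x : T) : option Om :=
  match x with
  | Tz => Some wzero
  | Tp a b c =>
      match c with
      | Tp _ _ _ => tau c
      | Tz =>
          if dec (w_is_limit b) then Some b
          else if dec (a = Tz) then Some wone
          else if dec (t_is_limit a) then tau a
          else None
      end
  end.

Definition derived (X : Om -> Prop) (th : Om) : Prop :=
  th <> wzero /\ forall a, wlt a th -> exists x, X x /\ wlt a x /\ wlt x th.
Definition club (X : Om -> Prop) : Prop :=
  (forall a, exists x, X x /\ wlt a x) /\ (forall th, derived X th -> X th).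

Definition Theta_cond (X : Om -> Prop) (f : T -> Om) (xi : T) (th : Om) : Prop :=
  X th /\ wlt (star xi) th /\
  forall z, nf z -> tlt z xi -> wlt (star z) th -> wlt (f z) th.
Definition IsTheta (X : Om -> Prop) (f : T -> Om) : Prop :=
  forall xi, nf xi -> Theta_cond X f xi (f xi) /\
    forall th, Theta_cond X f xi th -> wle (f xi) th.
Definition Theta (X : Om -> Prop) : T -> Om :=
  epsilon (inhabits (fun _ => wzero)) (IsTheta X).

(* Omega_n and hat-epsilon_{Omega+1};  a < sup_n Theta(Omega_n) iff a < Theta(Omega_n) for some n *)
Fixpoint Omn (n : nat) : T :=
  match n with O => tone | S m => Tp (Omn m) wone Tz end.
Definition in_hat (X : Om -> Prop) (xi : T) : Prop :=
  nf xi /\ exists n, wlt (star xi) (Theta X (Omn n)).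

Definition FIX (X : Om -> Prop) (xi : T) : Prop :=
  nf xi /\ wlt (star (fs xi wone)) (star xi) /\ tau xi = Some (star xi) /\
  exists g, nf g /\ tlt xi g /\ Theta X g = star xi.
Definition JUMP (X : Om -> Prop) (xi : T) : Prop :=
  xi = Tz \/ t_is_succ xi \/ FIX X xi.

End Ord.

(* Main.v *)
Require Import Defs.
From Stdlib Require Import List ClassicalEpsilon Classical FunctionalExtensionality Cantor.
Import ListNotations.

Lemma wlt_asym {Om : Omega1} (a b : Om) : wlt a b -> wlt b a -> False.
Proof. intros h1 h2. exact (wlt_irrefl _ a (wlt_trans _ _ _ _ h1 h2)). Qed.

Lemma wle_lt_trans {Om : Omega1} (a b c : Om) : wle a b -> wlt b c -> wlt a c.
Proof. intros [h|<-] h2; [eapply wlt_trans; eauto | exact h2]. Qed.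

Lemma wlt_le_trans {Om : Omega1} (a b c : Om) : wlt a b -> wle b c -> wlt a c.
Proof. intros h [h2|<-]; [eapply wlt_trans; eauto | exact h]. Qed.

Lemma wle_trans {Om : Omega1} (a b c : Om) : wle a b -> wle b c -> wle a c.
Proof. intros [h|<-] h2; [left; eapply wlt_le_trans; eauto | exact h2]. Qed.

Lemma not_lt_le {Om : Omega1} (a b : Om) : ~ wlt a b -> wle b a.
Proof. intros h. destruct (wlt_total _ a b) as [h1|[h1|h1]]; [contradiction| right; auto | left; auto]. Qed.

Lemma le_not_lt {Om : Omega1} (a b : Om) : wle a b -> ~ wlt b a.
Proof. intros [h|<-] h2; [eapply wlt_asym; eauto | eapply wlt_irrefl; eauto]. Qed.

Lemma wle_antisym {Om : Omega1} (a b : Om) : wle a b -> wle b a -> a = b.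
Proof. intros [h|h] h2; auto. exfalso; eapply le_not_lt; eauto. Qed.

Lemma wzero_le {Om : Omega1} (a : Om) : wle wzero a.
Proof. apply not_lt_le, wzero_least. Qed.

Lemma wzero_lt {Om : Omega1} (a : Om) : a <> wzero -> wlt wzero a.
Proof. intros h. destruct (wzero_le a) as [h1|h1]; auto. congruence. Qed.

Lemma wmax_ge_l {Om : Omega1} (a b : Om) : wle a (wmax a b).
Proof. unfold wmax, dec. destruct excluded_middle_informative; [left; auto | right; auto]. Qed.

Lemma wmax_ge_r {Om : Omega1} (a b : Om) : wle b (wmax a b).
Proof. unfold wmax, dec. destruct excluded_middle_informative; [right; auto | apply not_lt_le; auto]. Qed.

Lemma wmax_cases {Om : Omega1} (a b : Om) : wmax a b = a \/ wmax a b = b.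
Proof. unfold wmax, dec. destruct excluded_middle_informative; auto. Qed.

Lemma lt_succ_le {Om : Omega1} (a p : Om) : wlt a (wsucc p) -> wle a p.
Proof. intros h. apply not_lt_le. intros h2. destruct (wsucc_least _ _ _ h2) as [e|e].
  subst. eapply wlt_irrefl; eauto. eapply wlt_asym; eauto. Qed.

Lemma least_W {Om : Omega1} (Q : Om -> Prop) : (exists w, Q w) -> exists m, Q m /\ forall w, Q w -> wle m w.
Proof.
  intros [w0 hw0]. apply NNPP. intros hn. revert hw0. pattern w0.
  apply (well_founded_ind (wlt_wf Om)). intros w IH hw. apply hn. exists w. split; auto.
  intros w' hw'. apply not_lt_le. intros hl. exact (IH w' hl hw').
Qed.

Lemma fold_ge {Om : Omega1} (l : list Om) y : In y l -> wle y (fold_right wmax wzero l).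
Proof. induction l as [|x l IH]; simpl; [tauto|]. intros [<-|h].
  apply wmax_ge_l. eapply wle_trans; [apply IH; auto| apply wmax_ge_r]. Qed.

Lemma fold_le {Om : Omega1} (l : list Om) u : (forall y, In y l -> wle y u) -> wle (fold_right wmax wzero l) u.
Proof. induction l as [|x l IH]; simpl; intros h; [apply wzero_le|].
  destruct (wmax_cases x (fold_right wmax wzero l)) as [e|e]; rewrite e; auto. Qed.

Lemma fold_lt {Om : Omega1} (l : list Om) u : wlt wzero u -> (forall y, In y l -> wlt y u) -> wlt (fold_right wmax wzero l) u.
Proof. induction l as [|x l IH]; simpl; intros h0 h; [auto|].
  destruct (wmax_cases x (fold_right wmax wzero l)) as [e|e]; rewrite e; auto. Qed.

Lemma star_ge {Om : Omega1} (x : @T Om) y : In y (Cset x) -> wle y (star x).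
Proof. apply fold_ge. Qed.

Definition emb {Om : Omega1} (c : Om) : @T Om := if dec (c = wzero) then Tz else Tp Tz c Tz.

Lemma star_Tz {Om : Omega1} : star (@Tz Om) = wzero.
Proof. apply wle_antisym; [|apply wzero_le]. apply fold_le. simpl. intros y [<-|[]]; right; auto. Qed.

Lemma star_emb {Om : Omega1} (c : Om) : star (emb c) = c.
Proof. unfold emb, dec. destruct excluded_middle_informative as [e|e]. subst; apply star_Tz.
  apply wle_antisym. apply fold_le. simpl. intros y [<-|[<-|[<-|[]]]]; try apply wzero_le; right; auto.
  apply star_ge. simpl. auto. Qed.

Lemma nf_emb {Om : Omega1} (c : Om) : nf (emb c).
Proof. unfold emb, dec. destruct excluded_middle_informative as [e|e]; simpl; auto. Qed.

Lemma emb_nz {Om : Omega1} (b : Om) : b <> wzero -> emb b = Tp Tz b Tz.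
Proof. intros h; unfold emb, dec; destruct excluded_middle_informative; congruence. Qed.

Lemma emb_below {Om : Omega1} (z : @T Om) : nf z -> below_Omega z -> z = emb (star z).
Proof. destruct z as [|a b c]; simpl.
  intros; unfold emb, dec; rewrite star_Tz; destruct excluded_middle_informative; congruence.
  intros [_ [hb [_ hc]]] ->. destruct c as [|a' b' c']; [|destruct a'; simpl in hc; contradiction].
  rewrite <- (emb_nz b hb), star_emb. auto. Qed.

Lemma tlt_trans {Om : Omega1} (x y z : @T Om) : tlt x y -> tlt y z -> tlt x z.
Proof.
  revert y z. induction x as [|a IHa b c IHc]; intros y z h1 h2;
  destruct y as [|a' b' c']; destruct z as [|a'' b'' c'']; simpl in *; auto; try contradiction.
  destruct h1 as [h1|[e1 h1]]; destruct h2 as [h2|[e2 h2]]; subst.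
  - left; eauto.
  - left; auto.
  - left; auto.
  - right; split; auto. destruct h1 as [h1|[e1 h1]]; destruct h2 as [h2|[e2 h2]]; subst.
    left; eapply wlt_trans; eauto. left; auto. left; auto. right; split; eauto.
Qed.

Lemma tlt_irrefl {Om : Omega1} (x : @T Om) : ~ tlt x x.
Proof. induction x as [|a IHa b c IHc]; simpl; auto.
  intros [h|[_ [h|[_ h]]]]; auto. eapply wlt_irrefl; eauto. Qed.

Lemma tlt_emb {Om : Omega1} (c d : Om) : wlt c d -> tlt (emb c) (emb d).
Proof. intros h. assert (hd : d <> wzero) by (intro e; subst; eapply wzero_least; eauto).
  rewrite (emb_nz d hd). unfold emb, dec; destruct excluded_middle_informative; simpl; auto. Qed.

Lemma below_emb {Om : Omega1} (b : Om) (z : @T Om) : b <> wzero -> nf z -> tlt z (emb b) ->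
  below_Omega z /\ wlt (star z) b.
Proof. intros hb hz. rewrite (emb_nz b hb). destruct z as [|a' b' c']; simpl.
  intros _; split; auto. rewrite star_Tz; apply wzero_lt; auto.
  intros [h|[-> [h|[-> h]]]]; [destruct a'; contradiction| |destruct c'; contradiction].
  split; auto. destruct hz as [_ [hb' [_ hc]]]. destruct c' as [|a2 b2 c2]; [|destruct a2; contradiction].
  rewrite <- (emb_nz b' hb'), star_emb. auto. Qed.

Definition Rt {Om : Omega1} (z x : @T Om) : Prop := nf z /\ tlt z x.

Lemma acc_Tz {Om : Omega1} : Acc (@Rt Om) Tz.
Proof. constructor. intros z [_ h]. destruct z; simpl in h; contradiction. Qed.

Lemma acc_key {Om : Omega1} (a : @T Om) : Acc Rt a -> forall b c, nf (Tp a b c) -> Acc Rt (Tp a b c).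
Proof.
  induction 1 as [a _ IHa]. intros b. pattern b. apply (well_founded_ind (wlt_wf Om)).
  clear b. intros b IHb c hn.
  assert (hc : Acc Rt c).
  { destruct c as [|a2 b2 c2]. apply acc_Tz. destruct hn as [_ [_ [hc hl]]].
    apply IHa; [split; [destruct hc; tauto | exact hl] | exact hc]. }
  revert hn. induction hc as [c _ IHc]. intros hn. constructor. intros z [hz hl].
  destruct z as [|a' b' c']. apply acc_Tz.
  destruct hl as [hl|[-> [hl|[-> hl]]]].
  - apply IHa; auto. split; auto. destruct hz; auto.
  - apply IHb; auto.
  - apply IHc; auto. split; auto. destruct hz as [_ [_ [h _]]]; auto.
Qed.

Lemma wf_Rt {Om : Omega1} : well_founded (@Rt Om).
Proof.
  assert (H : forall x : @T Om, nf x -> Acc Rt x).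
  { induction x as [|a IHa b c _]; intros hx. apply acc_Tz.
    apply acc_key; auto. apply IHa. destruct hx; auto. }
  intros x. constructor. intros z [hz _]. auto.
Qed.

Lemma min_T {Om : Omega1} (Q : @T Om -> Prop) : (exists x, nf x /\ Q x) ->
  exists m, nf m /\ Q m /\ forall z, nf z -> tlt z m -> ~ Q z.
Proof.
  intros [x0 [h0 q0]]. apply NNPP. intros hn. revert h0 q0. pattern x0.
  apply (well_founded_ind wf_Rt). intros x IH hx qx. apply hn. exists x. split; auto. split; auto.
  intros z hz hl qz. exact (IH z (conj hz hl) hz qz).
Qed.

Lemma seg_inj {Om : Omega1} (a : Om) : exists e : Om -> nat,
  forall w w', wlt w a -> wlt w' a -> e w = e w' -> w = w'.
Proof.
  destruct (wlt_seg_countable _ a) as [f hf].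
  exists (fun w => match excluded_middle_informative (wlt w a) with
                   | left h => f (exist _ w h) | right _ => 0 end).
  intros w w' h h'. destruct excluded_middle_informative; [|contradiction].
  destruct excluded_middle_informative; [|contradiction].
  intros e. apply hf in e. exact (f_equal (@proj1_sig _ _) e).
Qed.

Lemma to_nat_inj (p q : nat * nat) : Cantor.to_nat p = Cantor.to_nat q -> p = q.
Proof. intros e. rewrite <- (cancel_of_to p), <- (cancel_of_to q), e. auto. Qed.

Lemma bound_nat {Om : Omega1} (g : nat -> Om) : exists u, forall n, wlt (g n) u.
Proof.
  apply NNPP. intros hn.
  assert (hall : forall u, exists n, wlt u (wsucc (g n))).
  { intros u. apply NNPP. intros h. apply hn. exists u. intros n. apply NNPP. intros h2.
    apply h. exists n. eapply wle_lt_trans; [apply not_lt_le; exact h2| apply wsucc_lt]. }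
  set (fn := fun n => epsilon (inhabits (fun _ : Om => 0)) (fun e : Om -> nat =>
     forall w w', wlt w (wsucc (g n)) -> wlt w' (wsucc (g n)) -> e w = e w' -> w = w')).
  assert (hfn : forall n w w', wlt w (wsucc (g n)) -> wlt w' (wsucc (g n)) -> fn n w = fn n w' -> w = w').
  { intros n. unfold fn. apply epsilon_spec. apply seg_inj. }
  set (N := fun u => epsilon (inhabits 0) (fun n => wlt u (wsucc (g n)))).
  assert (hN : forall u, wlt u (wsucc (g (N u)))).
  { intros u. unfold N. apply epsilon_spec. apply hall. }
  apply (W_uncountable Om). exists (fun u => Cantor.to_nat (N u, fn (N u) u)).
  intros x y e. apply to_nat_inj in e. injection e. intros e2 e1.
  rewrite <- e1 in e2. apply (hfn (N x)); auto. rewrite e1; auto.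
Qed.

Lemma bound_countable {Om : Omega1} {A : Type} (a0 : A) (P : A -> Prop) (enc : A -> nat) :
  (forall x y, P x -> P y -> enc x = enc y -> x = y) ->
  forall F : A -> Om, exists u, forall x, P x -> wlt (F x) u.
Proof.
  intros hinj F.
  destruct (bound_nat (fun n => F (epsilon (inhabits a0) (fun x => P x /\ enc x = n)))) as [u hu].
  exists u. intros x hx. specialize (hu (enc x)).
  assert (hs : P (epsilon (inhabits a0) (fun y => P y /\ enc y = enc x)) /\
               enc (epsilon (inhabits a0) (fun y => P y /\ enc y = enc x)) = enc x).
  { apply epsilon_spec. exists x; auto. }
  destruct hs as [h1 h2]. rewrite (hinj _ _ h1 hx h2) in hu. exact hu.
Qed.

Fixpoint tenc {Om : Omega1} (e : Om -> nat) (x : @T Om) : nat :=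
  match x with
  | Tz => 0
  | Tp a b c => S (Cantor.to_nat (tenc e a, Cantor.to_nat (e b, tenc e c)))
  end.

Lemma tenc_inj {Om : Omega1} (al : Om) (e : Om -> nat)
  (he : forall w w', wlt w al -> wlt w' al -> e w = e w' -> w = w') :
  forall x y : @T Om, (forall v, In v (Cset x) -> wlt v al) -> (forall v, In v (Cset y) -> wlt v al) ->
    tenc e x = tenc e y -> x = y.
Proof.
  induction x as [|a IHa b c IHc]; destruct y as [|a' b' c']; cbn [tenc Cset]; intros hx hy E; try discriminate; auto.
  apply eq_add_S in E. apply to_nat_inj in E. pose proof (f_equal fst E) as E3; pose proof (f_equal snd E) as E2; cbn [fst snd] in E2, E3.
  apply to_nat_inj in E2. pose proof (f_equal fst E2) as E5; pose proof (f_equal snd E2) as E4; cbn [fst snd] in E4, E5.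
  f_equal.
  - apply IHa; auto; intros v hv; [apply hx|apply hy]; apply in_or_app; auto.
  - apply he; auto; [apply hx|apply hy]; apply in_or_app; right; apply in_or_app; right; simpl; auto.
  - apply IHc; auto; intros v hv; [apply hx|apply hy]; apply in_or_app; right; apply in_or_app; auto.
Qed.

Lemma bound_terms {Om : Omega1} (al : Om) (F : @T Om -> Om) :
  exists u, forall z, wlt (star z) al -> wlt (F z) u.
Proof.
  destruct (seg_inj al) as [e he].
  apply (bound_countable Tz (fun z => wlt (star z) al) (tenc e)).
  intros x y hx hy. apply (tenc_inj al e he).
  intros v hv; eapply wle_lt_trans; [apply star_ge; exact hv| exact hx].
  intros v hv; eapply wle_lt_trans; [apply star_ge; exact hv| exact hy].
Qed.

Lemma closure {Om : Omega1} (X : Om -> Prop) (hX : club X) (f : @T Om -> Om) (u0 : Om) :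
  exists th, X th /\ wlt u0 th /\ forall z, wlt (star z) th -> wlt (f z) th.
Proof.
  assert (step : forall th, exists x, X x /\ wlt th x /\ forall z, wlt (star z) th -> wlt (f z) x).
  { intros th. destruct (bound_terms th f) as [u hu]. destruct (proj1 hX (wmax u th)) as [x [hx hl]].
    exists x. split; auto. split. eapply wle_lt_trans; [apply wmax_ge_r| exact hl].
    intros z hz. eapply wlt_trans; [apply hu; exact hz|]. eapply wle_lt_trans; [apply wmax_ge_l| exact hl]. }
  set (st := fun th => epsilon (inhabits u0) (fun x => X x /\ wlt th x /\ forall z, wlt (star z) th -> wlt (f z) x)).
  set (sq := fix sq (n : nat) : Om := match n with O => u0 | S m => st (sq m) end).
  assert (hs : forall n, X (sq (S n)) /\ wlt (sq n) (sq (S n)) /\ forall z, wlt (star z) (sq n) -> wlt (f z) (sq (S n))).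
  { intros n. simpl. unfold st. apply epsilon_spec. apply step. }
  destruct (least_W (fun u => forall n, wle (sq n) u)) as [s [hs1 hs2]].
  { destruct (bound_nat sq) as [u hu]. exists u. intros n; left; auto. }
  assert (hlt : forall n, wlt (sq n) s).
  { intros n. eapply wlt_le_trans; [apply (hs n)| apply hs1]. }
  assert (hcof : forall a, wlt a s -> exists n, wlt a (sq n)).
  { intros a ha. apply NNPP. intros hn. apply (le_not_lt s a); auto. apply hs2. intros n.
    apply not_lt_le. intros h. apply hn. exists n; auto. }
  exists s. split; [|split].
  - apply (proj2 hX). split.
    + intros e. apply (wzero_least _ (sq 0)). rewrite <- e. apply hlt.
    + intros a ha. destruct (hcof a ha) as [n hn]. exists (sq (S n)). split; [apply hs|]. split; auto.
      eapply wlt_trans; [exact hn| apply hs].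
  - apply (hlt 0).
  - intros z hz. destruct (hcof _ hz) as [n hn]. eapply wlt_trans; [apply (hs n); exact hn| apply hlt].
Qed.

Lemma Theta_exists {Om : Omega1} (X : Om -> Prop) (hX : club X) : exists f, IsTheta X f.
Proof.
  set (P := fun (x : @T Om) (rec : forall z, Rt z x -> Om) (th : Om) =>
          X th /\ wlt (star x) th /\ forall z (h : Rt z x), wlt (star z) th -> wlt (rec z h) th).
  set (F := fun (x : @T Om) (rec : forall z, Rt z x -> Om) =>
          epsilon (inhabits wzero) (fun th => P x rec th /\ forall th', P x rec th' -> wle th th')).
  set (f := Fix wf_Rt (fun _ => Om) F).
  assert (feq : forall x, f x = F x (fun z _ => f z)).
  { intros x. unfold f. apply (Fix_eq wf_Rt (fun _ => Om) F). intros x0 g1 g2 hg.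
    assert (e : g1 = g2).
    { apply functional_extensionality_dep; intros z. apply functional_extensionality_dep; intros h. auto. }
    rewrite e. reflexivity. }
  exists f. intros xi hxi.
  assert (hP : P xi (fun z _ => f z) (f xi) /\ forall th', P xi (fun z _ => f z) th' -> wle (f xi) th').
  { rewrite (feq xi). unfold F. apply epsilon_spec.
    apply least_W. destruct (closure X hX f (star xi)) as [th [h1 [h2 h3]]].
    exists th. split; auto. }
  destruct hP as [[h1 [h2 h3]] h4]. split.
  - split; auto. split; auto. intros z hz hl hs. exact (h3 z (conj hz hl) hs).
  - intros th [t1 [t2 t3]]. apply h4. split; auto. split; auto. intros z [hz hl] hs. auto.
Qed.

Lemma not_le_lt {Om : Omega1} (a b : Om) : ~ wle a b -> wlt b a.
Proof. intros h. destruct (wlt_total _ a b) as [h1|[h1|h1]]; auto; exfalso; apply h; [left|right]; auto. Qed.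

Lemma tlt_emb_big {Om : Omega1} (a : Om) (al : @T Om) be ga : al <> Tz -> tlt (emb a) (Tp al be ga).
Proof. intros h. unfold emb, dec; destruct excluded_middle_informative; simpl; auto.
  destruct al; [contradiction| left; simpl; auto]. Qed.

Lemma wone_nz {Om : Omega1} : (@wone Om) <> wzero.
Proof. unfold wone. intros e. apply (wzero_least Om wzero). rewrite <- e at 2. apply wsucc_lt. Qed.

Lemma limit_succ_lt {Om : Omega1} (b c : Om) : ~ w_is_succ b -> wlt c b -> wlt (wsucc c) b.
Proof. intros hb hc. destruct (wsucc_least _ _ _ hc) as [e|e]; auto. exfalso; apply hb. exists c; auto. Qed.

Lemma nf_Omn {Om : Omega1} n : nf (@Omn Om n).
Proof. induction n; simpl; repeat split; auto; apply wone_nz. Qed.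

Lemma Cset_Omn {Om : Omega1} n y : In y (Cset (@Omn Om n)) -> y = wzero \/ y = wone.
Proof. induction n; simpl; intros h.
  - destruct h as [<-|[<-|[<-|[]]]]; auto.
  - apply in_app_or in h. destruct h as [h|h]; auto. simpl in h. destruct h as [<-|[<-|[]]]; auto. Qed.

Section Main.
Context {Om : Omega1} (X : Om -> Prop) (f : @T Om -> Om) (HT : IsTheta X f).

Lemma th_X xi : nf xi -> X (f xi).
Proof. intros h. apply (HT xi h). Qed.
Lemma th_star xi : nf xi -> wlt (star xi) (f xi).
Proof. intros h. apply (HT xi h). Qed.
Lemma th_below xi z : nf xi -> nf z -> tlt z xi -> wlt (star z) (f xi) -> wlt (f z) (f xi).
Proof. intros h. apply (HT xi h). Qed.
Lemma th_min xi th : nf xi -> Theta_cond X f xi th -> wle (f xi) th.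
Proof. intros h. apply (HT xi h). Qed.

Lemma mono_emb c d : wlt c d -> wlt (f (emb c)) (f (emb d)).
Proof. intros h. apply th_below; try apply nf_emb. apply tlt_emb; auto.
  rewrite star_emb. eapply wlt_trans; [exact h|]. rewrite <- (star_emb d) at 1. apply th_star, nf_emb. Qed.

Lemma emb_lt_f c : wlt c (f (emb c)).
Proof. rewrite <- (star_emb c) at 1. apply th_star, nf_emb. Qed.

Lemma notlim xi a : nf xi -> wlt a (f xi) -> wle (star xi) a ->
  (forall z, nf z -> tlt z xi -> wlt (star z) (f xi) -> wle (f z) a) -> ~ derived X (f xi).
Proof.
  intros hxi ha hs hz [_ hd]. destruct (hd a ha) as [x [hx [h1 h2]]].
  apply (le_not_lt (f xi) x); auto. apply th_min; auto. split; auto. split.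
  eapply wle_lt_trans; eauto. intros z hnz hl hsz. eapply wle_lt_trans; [apply hz; auto|exact h1].
  eapply wlt_trans; eauto.
Qed.

End Main.

Theorem proposition4p8 (Om : Omega1) (X : Om -> Prop) :
  club X -> ~ X wzero ->
  forall xi : @T Om, in_hat X xi ->
    (~ derived X (Theta X xi) <-> (below_Omega xi /\ JUMP X xi)).
Proof.
  intros hX h0 xi [hnf [n hn]].
  assert (HT : IsTheta X (Theta X)).
  { unfold Theta. apply epsilon_spec. apply Theta_exists; auto. }
  set (f := Theta X) in *.
  assert (fnz : forall x, nf x -> f x <> wzero).
  { intros x hx e. apply h0. rewrite <- e. apply (th_X X f HT x hx). }
  destruct (classic (below_Omega xi)) as [hb|hb].
  2:{ destruct xi as [|al be ga]; simpl in hb; [tauto|].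
      split; [|intros [h _]; contradiction]. intros hn'. exfalso. apply hn'. split; [apply fnz; auto|].
      intros a ha. exists (f (emb a)). split; [apply (th_X X f HT), nf_emb|]. split; [apply (emb_lt_f X f HT)|].
      apply (th_below X f HT); auto. apply nf_emb. apply tlt_emb_big; auto. rewrite star_emb; auto. }
  pose proof (emb_below xi hnf hb) as exi. set (b := star xi) in *. clearbody b. subst xi.

  destruct (classic (b = wzero)) as [hb0|hb0].
  { subst b. assert (e : @emb Om wzero = Tz) by (unfold emb, dec; destruct excluded_middle_informative; congruence).
    rewrite e in *. split; [intros _; split; [simpl; auto| left; auto]|].
    intros _. apply (notlim X f HT Tz wzero); simpl; auto.
    rewrite <- star_Tz at 1. apply (th_star X f HT); simpl; auto. rewrite star_Tz; right; auto.
    intros z _ hz; destruct z; simpl in hz; contradiction. }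
  destruct (classic (w_is_succ b)) as [[p hp]|hns].
  {
    split; [intros _; split; [rewrite emb_nz; simpl; auto| right; left; rewrite emb_nz; simpl; auto; split; auto; exists p; auto]|].
    intros _. subst b. apply (notlim X f HT _ (f (emb p))). apply nf_emb.
    apply (mono_emb X f HT). apply wsucc_lt.
    rewrite star_emb. destruct (wsucc_least _ _ _ (emb_lt_f X f HT p)) as [e|e]; [right; auto| left; auto].
    intros z hz hl _. destruct (below_emb _ z hb0 hz hl) as [hbz hsz]. rewrite (emb_below z hz hbz).
    apply lt_succ_le in hsz. destruct hsz as [hsz|hsz]. left; apply (mono_emb X f HT); auto. rewrite hsz; right; auto. }
  assert (hlim : w_is_limit b) by (split; auto).
  assert (hfs : star (fs (emb b) wone) = wone).
  { rewrite (emb_nz b hb0). simpl. unfold dec at 1. destruct excluded_middle_informative; [|contradiction].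
    unfold tmul, dec. destruct excluded_middle_informative as [e|e]; [exfalso; apply (@wone_nz Om); auto|].
    rewrite <- (emb_nz wone e). apply star_emb. }
  assert (htau : tau (emb b) = Some b).
  { rewrite (emb_nz b hb0). simpl. unfold dec at 1. destruct excluded_middle_informative; [|contradiction]. auto. }
  assert (hone : wlt wone b) by (apply limit_succ_lt; auto; apply wzero_lt; auto).
  split.
  - intros hnd. split; [rewrite emb_nz; simpl; auto|]. right; right.
    split; [apply nf_emb|]. rewrite hfs, htau, star_emb. split; auto. split; auto.
    assert (hcl : forall c, wlt c b -> wlt (f (emb c)) b).
    { intros c0 hc0. apply NNPP. intros hc0'. apply not_lt_le in hc0'. apply hnd. split; [apply fnz, nf_emb|].
      intros a ha. destruct (classic (exists c, wlt c b /\ wlt a (f (emb c)))) as [[c [hc hac]]|hno].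
      - exists (f (emb c)). split; [apply (th_X X f HT), nf_emb|]. split; auto. apply (mono_emb X f HT); auto.
      - exfalso.
        destruct (least_W (fun u => forall c, wlt c b -> wle (f (emb c)) u)) as [s [hs1 hs2]].
        { exists a. intros c hc. apply not_lt_le. intros h. apply hno. exists c; auto. }
        assert (hslt : forall c, wlt c b -> wlt (f (emb c)) s).
        { intros c hc. eapply wlt_le_trans; [apply (mono_emb X f HT), wsucc_lt| apply hs1, limit_succ_lt; auto]. }
        assert (hcof : forall a', wlt a' s -> exists c, wlt c b /\ wlt a' (f (emb c))).
        { intros a' ha'. apply NNPP. intros hn2. apply (le_not_lt s a'); auto. apply hs2.
          intros c hc. apply not_lt_le. intros h. apply hn2. exists c; auto. }
        assert (hXs : X s).
        { apply (proj2 hX). split.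
          - intros e. apply (wzero_least Om (f (emb wzero))). pose proof (hslt wzero (wzero_lt b hb0)) as hh.
            rewrite e in hh. exact hh.
          - intros a' ha'. destruct (hcof a' ha') as [c [hc hc']]. exists (f (emb c)).
            split; [apply (th_X X f HT), nf_emb|]. split; auto. }
        apply (le_not_lt (f (emb b)) a); auto.
        eapply wle_trans; [|apply hs2; intros c hc; apply not_lt_le; intros h; apply hno; exists c; auto].
        apply (th_min X f HT); [apply nf_emb|]. split; auto. split.
        + rewrite star_emb. eapply wle_lt_trans; [exact hc0'| apply hslt; auto].
        + intros z hz hl _. destruct (below_emb _ z hb0 hz hl) as [hbz hsz]. rewrite (emb_below z hz hbz).
          apply hslt; auto. }
    assert (hXb : X b).
    { apply (proj2 hX). split; auto. intros a ha. exists (f (emb a)). split; [apply (th_X X f HT), nf_emb|].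
      split; [apply (emb_lt_f X f HT)| apply hcl; auto]. }
    destruct (min_T (fun g => wlt (star g) b /\ wle b (f g))) as [g [hg [[hg1 hg2] hg3]]].
    { exists (Omn n). split; [apply nf_Omn|]. split; [|left; exact hn].
      apply fold_lt. apply wzero_lt; auto. intros y hy. destruct (Cset_Omn n y hy) as [->| ->]; auto.
      apply wzero_lt; auto. }
    assert (hfg : f g = b).
    { apply wle_antisym; auto. apply (th_min X f HT); auto. split; auto. split; auto.
      intros z hz hl hsz. apply not_le_lt. intros h. apply (hg3 z hz hl). auto. }
    exists g. split; auto. split; auto.
    destruct g as [|a' b' c'].
    + exfalso. rewrite star_Tz in hg1. apply (le_not_lt _ _ hg2).
      assert (e : @emb Om wzero = Tz) by (unfold emb, dec; destruct excluded_middle_informative; congruence).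
      rewrite <- e. apply hcl; auto.
    + destruct (classic (a' = Tz)) as [ea|ea].
      * exfalso. subst a'. destruct hg as [_ [hb' [_ hc']]]. destruct c' as [|a2 b2 c2]; [|destruct a2; contradiction].
        rewrite <- (emb_nz b' hb') in *. rewrite star_emb in hg1. apply (le_not_lt _ _ hg2). apply hcl; auto.
      * apply tlt_emb_big; auto.
  - intros [_ hj]. destruct hj as [hj|[hj|hj]].
    + exfalso. rewrite (emb_nz b hb0) in hj. discriminate.
    + exfalso. rewrite (emb_nz b hb0) in hj. simpl in hj. destruct hj; auto.
    + destruct hj as [_ [_ [_ [g [hg [hlg hfg]]]]]]. rewrite star_emb in hfg. change (f g = b) in hfg.
      apply (notlim X f HT _ b). apply nf_emb. rewrite <- (star_emb b) at 1. apply (th_star X f HT), nf_emb.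
      rewrite star_emb; right; auto.
      intros z hz hl _. left. rewrite <- hfg. apply (th_below X f HT); auto. eapply tlt_trans; eauto.
      rewrite hfg. apply (below_emb _ z hb0 hz hl).
Qed.
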